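(* Let $G,H$ be finite groups and $U\leq G\times H$ a subdirect product. Suppose that for each prime divisor $p$ of $|q(U)|$ the Sylow $p$-subgroups of $q(U)$ are cyclic. Then $U$ is extensible.
   Context: For $U\leq G\times H$: $p_1(U)=\{g:\exists h,(g,h)\in U\}$, $p_2(U)=\{h:\exists g,(g,h)\in U\}$, $k_1(U)=\{g:(g,1)\in U\}$; $U$ is a subdirect product if $p_1(U)=G$, $p_2(U)=H$; the Goursat quotient is $q(U)=p_1(U)/k_1(U)$. An abelian group $A$ satisfies the Hypothesis (with set of primes $\pi$) if there is a unique set of primes $\pi$ such that for every $n\in\mathbb{N}$ the $n$-torsion part of $A$ is cyclic of order $n_\pi$ (the $\pi$-part of $n$). $U$ is $A$-extensible if every homomorphism $U\to A$ extends to a homomorphism $G\times H\to A$; $U$ is extensible if it is $A$-extensible for every abelian group $A$ satisfying the Hypothesis. *)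

(* Defs.v *)
From HB Require Import structures.
From mathcomp Require Import all_boot all_order all_algebra all_fingroup all_solvable.
Set Implicit Arguments. Unset Strict Implicit. Unset Printing Implicit Defensive.
Import GRing.Theory.
Local Open Scope group_scope.

Definition p1 (gT hT : finGroupType) (U : {set gT * hT}) : {set gT} :=
  [set x.1 | x in U].
Definition p2 (gT hT : finGroupType) (U : {set gT * hT}) : {set hT} :=
  [set x.2 | x in U].
Definition k1 (gT hT : finGroupType) (U : {set gT * hT}) : {set gT} :=
  [set g | (g, 1) \in U].
Definition goursat_q (gT hT : finGroupType) (U : {set gT * hT}) :=
  (p1 U / k1 U)%g.

Local Open Scope ring_scope.

(* "the n-torsion part of A is cyclic of order m" *)
Definition torsion_cyclic_of_order (A : zmodType) (n m : nat) : Prop :=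
  exists g : A,
    g *+ n = 0 /\ g *+ m = 0 /\ (forall k, (0 < k < m)%N -> g *+ k != 0) /\
    (forall x : A, x *+ n = 0 -> exists k : nat, x = g *+ k).

Definition hyp_with (A : zmodType) (pi : nat_pred) : Prop :=
  (forall p, p \in pi -> prime p) /\
  (forall n : nat, (0 < n)%N -> torsion_cyclic_of_order A n (n`_pi)%N).

Definition Hypothesis_A (A : zmodType) : Prop :=
  exists pi : nat_pred, hyp_with A pi /\
    forall pi' : nat_pred, hyp_with A pi' -> pi' =i pi.

Definition hom_on (T : finGroupType) (A : zmodType) (S : {set T}) (f : T -> A) :=
  forall x y, x \in S -> y \in S -> f (x * y)%g = f x + f y.

Definition A_extensible (gT hT : finGroupType) (G : {set gT}) (H : {set hT})
    (U : {set gT * hT}) (A : zmodType) : Prop :=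
  forall f : gT * hT -> A, hom_on U f ->
    exists F : gT * hT -> A, hom_on (setX G H) F /\ (forall u, u \in U -> F u = f u).

Definition extensible (gT hT : finGroupType) (G : {set gT}) (H : {set hT})
    (U : {set gT * hT}) : Prop :=
  forall A : zmodType, Hypothesis_A A -> A_extensible G H U A.

(* Main.v *)
Require Import Defs.
From mathcomp Require Import all_boot all_order all_algebra all_fingroup all_solvable.
Set Implicit Arguments. Unset Strict Implicit. Unset Printing Implicit Defensive.
Import GRing.Theory.
Local Open Scope group_scope.
Local Open Scope ring_scope.

Definition divisible_tors (A : zmodType) := forall (y : A) (N r : nat),
  (0 < N)%N -> (0 < r)%N -> y *+ N = 0 -> exists a : A, a *+ r = y.

Lemma order_dvd (A : zmodType) (g : A) m :
  (forall k, (0 < k < m)%N -> g *+ k != 0) -> g *+ m = 0 -> (0 < m)%N ->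
  forall j, g *+ j = 0 -> (m %| j)%N.
Proof.
move=> min gm m0 j gj.
have e : g *+ j = g *+ (j %% m).
  by rewrite {1}(divn_eq j m) mulrnDr mulnC mulrnA gm mul0rn add0r.
apply/negPn/negP => nd.
have := min (j %% m)%N; rewrite ltn_pmod // -e gj eqxx lt0n.
by rewrite -/(m %| j)%N (negbTE nd) => /(_ isT).
Qed.

Lemma hypA_div (A : zmodType) : Hypothesis_A A -> divisible_tors A.
Proof.
case=> pi [[_ tc] _] y N r N0 r0 yN.
have M0 : (0 < r * N)%N by rewrite muln_gt0 r0.
have [g [gM [gm [gmin ggen]]]] := tc _ M0.
set m := partn (r * N) pi in gm gmin.
have m0 : (0 < m)%N by rewrite part_gt0.
have [k yk] : exists k, y = g *+ k.
  by apply: ggen; rewrite mulnC mulrnA yN mul0rn.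
have dkN : (m %| k * N)%N by apply: (order_dvd gmin gm m0); rewrite mulrnA -yk.
set rp := partn r pi; set r' := partn r pi^'; set Np := partn N pi.
have em : m = (rp * Np)%N by rewrite /m partnM.
have Np0 : (0 < Np)%N by rewrite part_gt0.
have rp0 : (0 < rp)%N by rewrite part_gt0.
have er : r = (rp * r')%N by rewrite /rp /r' partnC.
have rpk : (rp %| k)%N.
  move: dkN; rewrite -(partnC pi N0) em -/Np mulnCA (mulnC rp) dvdn_pmul2l //.
  by rewrite Gauss_dvdl // coprime_partC.
have [k' ek] := dvdnP rpk.
have cop : coprime Np r'.
  by rewrite /Np /r' coprime_partC.
have [a _ da] := Bezoutl r' Np0.
rewrite (eqnP cop) in da.
exists (- (g *+ a) *+ k').
apply/eqP; rewrite -subr_eq0 -mulrnA mulNrn -mulrnA yk ek -opprD -mulrnDr oppr_eq0.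
rewrite mulnCA -mulnDr mulnC mulrnA.
have : (m %| (a * r + rp))%N.
  rewrite em er mulnA (mulnC a) -mulnA -[X in (_ + X)%N]muln1 -mulnDr dvdn_pmul2l //.
  by rewrite addnC.
by case/dvdnP=> c ->; rewrite mulnC mulrnA gm !mul0rn.
Qed.
Lemma hom1 (T : finGroupType) (A : zmodType) (S : {group T}) (f : T -> A) :
  hom_on S f -> f 1%g = 0.
Proof.
move=> hf; have := hf 1%g 1%g (group1 S) (group1 S); rewrite mulg1.
by move/(congr1 (fun z => z - f 1%g)); rewrite addrK subrr.
Qed.

Lemma homV (T : finGroupType) (A : zmodType) (S : {group T}) (f : T -> A) x :
  hom_on S f -> x \in S -> f (x^-1)%g = - f x.
Proof.
move=> hf xS; apply/eqP; rewrite -subr_eq0 opprK -hf ?groupV // mulVg.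
by rewrite (hom1 hf).
Qed.

Lemma homX (T : finGroupType) (A : zmodType) (S : {group T}) (f : T -> A) x n :
  hom_on S f -> x \in S -> f (x ^+ n)%g = f x *+ n.
Proof.
move=> hf xS; elim: n => [|n IH]; first by rewrite expg0 (hom1 hf) mulr0n.
by rewrite expgS hf ?groupX // IH mulrS.
Qed.

Lemma homJ (T : finGroupType) (A : zmodType) (S : {group T}) (f : T -> A) x y :
  hom_on S f -> x \in S -> y \in S -> f (x ^ y)%g = f x.
Proof.
move=> hf xS yS; rewrite /conjg !hf ?groupV ?groupM // (homV hf yS).
by rewrite addrC addrK.
Qed.

Lemma homcard (T : finGroupType) (A : zmodType) (S : {group T}) (f : T -> A) x :
  hom_on S f -> x \in S -> f x *+ #|S| = 0.
Proof. by move=> hf xS; rewrite -(homX _ hf xS) expg_cardG // (hom1 hf). Qed.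

Lemma expgVD (T : finGroupType) (x : T) i j : (x ^- (i + j) = x ^- j * x ^- i)%g.
Proof. by rewrite expgD invMg. Qed.

Lemma cyclic_ext (gT : finGroupType) (A : zmodType) (L K : {group gT})
    (phi : gT -> A) (x : gT) :
  divisible_tors A -> K \subset L -> hom_on K phi ->
  (forall y k, y \in L -> k \in K -> phi (k ^ y)%g = phi k) ->
  (forall y k, y \in L -> k \in K -> (k ^ y)%g \in K) ->
  x \in L -> (forall l, l \in L -> exists j, (x ^- j * l)%g \in K) ->
  exists alpha : gT -> A, hom_on L alpha /\ forall k, k \in K -> alpha k = phi k.
Proof.
move=> divA sKL hphi invphi nK xL gen.
have exr : exists n, (0 < n)%N && (x ^+ n \in K)%g.
  by exists #[x]%g; rewrite order_gt0 expg_order group1.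
case: (ex_minnP exr) => r /andP[r0 xrK] rmin.
have [a ea] : exists a, a *+ r = phi (x ^+ r)%g.
  apply: (divA _ #|K|) => //; exact: homcard.
have uniq_idx : forall l i j, (i < r)%N -> (j < r)%N ->
    (x ^- i * l \in K)%g -> (x ^- j * l \in K)%g -> i = j.
  move=> l.
  suff H : forall i j, (i <= j)%N -> (j < r)%N ->
      (x ^- i * l \in K)%g -> (x ^- j * l \in K)%g -> i = j.
    move=> i j ir jr iK jK; case: (leqP i j) => ij; first exact: H.
    by apply/esym/H => //; apply: ltnW.
  move=> i j ij jr iK jK.
  have : (x ^+ (j - i) \in K)%g.
    have -> : (x ^+ (j - i) = (x ^- i * l) * (x ^- j * l)^-1)%g.
      rewrite invMg invgK mulgA mulgK -{2}(subnKC ij) expgD mulKg //.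
    by rewrite groupM ?groupV.
  case: (posnP (j - i)) => [|pos xK].
    by move/eqP; rewrite subn_eq0 => ji _; apply/eqP; rewrite eqn_leq ij.
  have := rmin _ (introT andP (conj pos xK)).
  by move=> rle; exfalso; move: (leq_trans rle (leq_subr i j)); rewrite leqNgt jr.
have ex_idx : forall l, l \in L -> exists2 i, (i < r)%N & (x ^- i * l \in K)%g.
  move=> l lL; have exj := gen l lL.
  case: (ex_minnP exj) => j jK jmin; exists j => //.
  rewrite ltnNge; apply/negP => rj.
  have : (x ^- (j - r) * l \in K)%g.
    have -> : (x ^- (j - r) * l = x ^+ r * (x ^- j * l))%g.
      by rewrite -{2}(subnK rj) expgVD mulgA mulKVg.
    by rewrite groupM.
  move/jmin; rewrite leqNgt => /negP; apply.
  by rewrite ltn_subrL r0 (leq_trans r0 rj).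
pose alpha l := if [pick i : 'I_r | (x ^- i * l \in K)%g] is Some i
                then a *+ i + phi (x ^- i * l)%g else 0.
have alphaE : forall l i, (i < r)%N -> (x ^- i * l \in K)%g ->
    alpha l = a *+ i + phi (x ^- i * l)%g.
  move=> l i ir iK; rewrite /alpha; case: pickP => [j /= jK|].
    by rewrite (uniq_idx l j i).
  by move/(_ (Ordinal ir)); rewrite /= iK.
exists alpha; split; last first.
  by move=> k kK; rewrite (alphaE k 0%N) // expg0 invg1 mul1g // mulr0n add0r.
move=> l l' lL l'L.
have [i ir iK] := ex_idx l lL; have [j jr jK] := ex_idx l' l'L.
rewrite (alphaE l i) // (alphaE l' j) //.
set k := (x ^- i * l)%g in iK *; set k' := (x ^- j * l')%g in jK *.
have xjL : (x ^+ j \in L)%g by rewrite groupX.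
have e : (x ^- (i + j) * (l * l') = (k ^ (x ^+ j)) * k')%g.
  rewrite expgVD /k /k' /conjg !mulgA; congr (_ * _)%g.
  by rewrite mulgK.
have kK : ((k ^ (x ^+ j)) * k' \in K)%g by rewrite groupM // nK.
case: (ltnP (i + j) r) => ijr.
  rewrite (alphaE (l * l')%g (i + j)%N) //; last by rewrite e.
  rewrite e hphi ?nK // (invphi _ _ xjL iK).
  by rewrite mulrnDr; rewrite !addrA; congr (_ + _); rewrite -!addrA; congr (_ + _); rewrite addrC.
have e2 : (x ^- (i + j - r) * (l * l') = x ^+ r * ((k ^ (x ^+ j)) * k'))%g.
  rewrite -e mulgA -{2}(subnK ijr) expgVD.
  by rewrite !mulgA mulgV mul1g.
rewrite (alphaE (l * l')%g (i + j - r)%N); last by rewrite e2 groupM.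
  rewrite e2 (hphi _ _ xrK kK) (hphi _ _ (nK _ _ xjL iK) jK) (invphi _ _ xjL iK) -ea.
  rewrite addrA -mulrnDr subnK // mulrnDr.
  by rewrite !addrA; congr (_ + _); rewrite -!addrA; congr (_ + _); rewrite addrC.
rewrite ltn_subLR // -addSn; apply: leq_add => //; exact: ltnW.
Qed.
Lemma repr_trans_mem (gT : finGroupType) (L : {group gT}) y z :
  (repr (L :* y) * z * (repr (L :* (y * z)))^-1 \in L)%g.
Proof.
have /rcosetP[l1 l1L ->] := mem_repr_rcoset L y.
have /rcosetP[l2 l2L ->] := mem_repr_rcoset L (y * z)%g.
rewrite invMg !mulgA -(mulgA l1 y z) mulgK; by rewrite groupM ?groupV.
Qed.

Lemma transfer_ext (gT : finGroupType) (A : zmodType) (G L K : {group gT})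
    (phi alphaL : gT -> A) :
  K \subset L -> L \subset G -> G \subset 'N(K) -> hom_on L alphaL ->
  (forall k, k \in K -> alphaL k = phi k) ->
  (forall g k, g \in G -> k \in K -> phi (k ^ g)%g = phi k) ->
  exists alpha : gT -> A, hom_on G alpha /\
     forall k, k \in K -> alpha k = phi k *+ #|G : L|.
Proof.
move=> sKL sLG nKG hL aLphi invphi.
pose V g := \sum_(C in rcosets L G) alphaL (repr C * g * (repr (C :* g))^-1)%g.
exists V; split.
  move=> s t Gs Gt /=.
  rewrite /V [X in _ = _ + X](reindex_acts 'Rs _ Gs) ?actsRs_rcosets //= -big_split /=.
  apply: eq_bigr => _ /rcosetsP[x Gx ->]; rewrite !rcosetE -!rcosetM.
  rewrite -hL ?repr_trans_mem //; congr (alphaL _).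
  by rewrite !mulgA mulgKV.
move=> k kK.
rewrite /V /indexg -sumr_const; apply: eq_bigr => _ /rcosetsP[x Gx ->].
have xG : forall y, (y \in L :* x)%g -> y \in G.
  by move=> y /rcosetP[l lL ->]; rewrite groupM // (subsetP sLG).
have rG := xG _ (mem_repr_rcoset L x).
have kG : k \in G by rewrite (subsetP sLG) // (subsetP sKL).
have kJK : forall y, y \in G -> (k ^ y)%g \in K.
  by move=> y yG; rewrite memJ_norm // (subsetP nKG).
have -> : (L :* x :* k = L :* x)%g.
  have e : (x * k = (k ^ x^-1) * x)%g by rewrite /conjg invgK mulgA mulgKV.
  have kL : (k ^ x^-1)%g \in L by rewrite (subsetP sKL) // kJK ?groupV.
  by rewrite -rcosetM e rcosetM (rcoset_id kL).
set r := repr (L :* x).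
have -> : (r * k * r^-1 = k ^ r^-1)%g by rewrite /conjg invgK mulgA.
by rewrite aLphi ?kJK ?groupV // invphi ?groupV.
Qed.

Lemma prime_step (gT : finGroupType) (A : zmodType) (G K : {group gT})
    (phi : gT -> A) (p : nat) :
  divisible_tors A -> K <| G -> hom_on K phi ->
  (forall g k, g \in G -> k \in K -> phi (k ^ g)%g = phi k) ->
  (forall p, prime p -> (p %| #|(G / K)%g|)%N ->
     forall P : {group coset_of K}, P \in 'Syl_p((G / K)%g) -> cyclic P) ->
  prime p ->
  exists2 n, ~~ (p %| n)%N & exists alpha : gT -> A, hom_on G alpha /\
     forall k, k \in K -> alpha k = phi k *+ n.
Proof.
move=> divA /andP[sKG nKG] hphi invphi cycH pp.
have [P sylP] := Sylow_exists p G.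
have sPG := pHall_sub sylP.
have nKP : P \subset 'N(K) := subset_trans sPG nKG.
pose L := (P <*> K)%G.
have sKL : K \subset L by apply: joing_subr.
have sPL : P \subset L by apply: joing_subl.
have sLG : L \subset G by rewrite join_subG sPG sKG.
have nKL : L \subset 'N(K) := subset_trans sLG nKG.
have eLK : (L / K = P / K)%g by apply: quotientYidr.
have sylPK : p.-Sylow((G / K)%g) (P / K)%g by apply: quotient_pHall.
have cycLK : cyclic (L / K)%g.
  rewrite eLK.
  case: (boolP (p %| #|(G / K)%g|)%N) => pdiv.
    by apply: (cycH p pp pdiv (P / K)%G); rewrite inE.
  have : #|(P / K)%g| = 1%N.
    by rewrite (card_Hall sylPK) part_p'nat // p'natE.
  by move/eqP; rewrite -trivg_card1 => /eqP ->; apply: cyclic1.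
have [xb exb] := cyclicP cycLK.
have : xb \in (L / K)%g by rewrite exb cycle_id.
case/morphimP => x xN xL exbx.
have gen : forall l, l \in L -> exists j, (x ^- j * l)%g \in K.
  move=> l lL; have lN : l \in 'N(K) := subsetP nKL l lL.
  have : coset K l \in (L / K)%g by rewrite mem_quotient.
  rewrite exb => /cycleP[j]; rewrite exbx -morphX //.
  move/(rcoset_kercosetP lN (groupX j xN)); rewrite mem_rcoset => lxK.
  exists j; have -> : (x ^- j * l = (l * x ^- j) ^ l)%g.
    by rewrite /conjg !mulgA mulVg mul1g.
  by rewrite memJ_norm.
have nK : forall y k, y \in L -> k \in K -> (k ^ y)%g \in K.
  by move=> y k yL kK; rewrite memJ_norm // (subsetP nKL).
have invL : forall y k, y \in L -> k \in K -> phi (k ^ y)%g = phi k.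
  by move=> y k yL kK; rewrite invphi // (subsetP sLG).
have [alphaL [hL aL]] := cyclic_ext divA sKL hphi invL nK xL gen.
have [alpha [hA aA]] := transfer_ext sKL sLG nKG hL aL invphi.
exists #|G : L|; last by exists alpha.
case/and3P: sylP => _ _; rewrite p'natE // => p'i.
apply/negP => pd; move/negP: p'i; apply.
exact: dvdn_trans pd (indexgS _ sPL).
Qed.

Lemma main_ext (gT : finGroupType) (A : zmodType) (G K : {group gT})
    (phi : gT -> A) :
  divisible_tors A -> K <| G -> hom_on K phi ->
  (forall g k, g \in G -> k \in K -> phi (k ^ g)%g = phi k) ->
  (forall p, prime p -> (p %| #|(G / K)%g|)%N ->
     forall P : {group coset_of K}, P \in 'Syl_p((G / K)%g) -> cyclic P) ->
  exists alpha : gT -> A, hom_on G alpha /\ forall k, k \in K -> alpha k = phi k.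
Proof.
move=> divA nsKG hphi invphi cycH.
pose S n := exists alpha : gT -> A, hom_on G alpha /\
   forall k, k \in K -> alpha k = phi k *+ n.
have S_G : S #|G|.
  exists (fun _ => 0); split; first by move=> x y _ _; rewrite addr0.
  move=> k kK; have /dvdnP[c ->] := cardSg (normal_sub nsKG).
  by rewrite mulnC mulrnA (homcard hphi kK) mul0rn.
have S_gcd : forall a b, (0 < a)%N -> S a -> S b -> S (gcdn a b).
  move=> a b a0 [aa [ha ea]] [ab [hb eb]].
  have [u _ /dvdnP[c e]] := Bezoutl b a0.
  exists (fun g => aa g *+ c - ab g *+ u); split.
    move=> x y xG yG /=; rewrite ha // hb // !mulrnDl opprD.
    by rewrite addrACA.
  move=> k kK /=; rewrite ea // eb // -!mulrnA (mulnC a) (mulnC b) -e.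
  by rewrite mulrnDr addrK.
have key : forall N n, (n < N)%N -> (0 < n)%N -> (n %| #|G|)%N -> S n -> S 1%N.
  elim=> // N IH n nN n0 nG Sn.
  case: (ltngtP n 1) => [n1|n1|e1]; last 1 first.
  - by move: Sn; rewrite e1.
  - by move: n1 n0; rewrite ltnS leqn0 => /eqP ->.
  have pp := pdiv_prime n1.
  have [m pm Sm] := prime_step divA nsKG hphi invphi cycH pp.
  have Sg := S_gcd _ _ n0 Sn Sm.
  apply: (IH (gcdn n m)) => //.
  - apply: (@leq_trans n); last by rewrite -ltnS.
    rewrite ltn_neqAle.
    rewrite (dvdn_leq n0 (dvdn_gcdl n m)) andbT.
    apply/negP => /eqP ge; move/negP: pm; apply.
    by apply: dvdn_trans (pdiv_dvd n) _; rewrite -ge dvdn_gcdr.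
  - by rewrite gcdn_gt0 n0.
  - exact: dvdn_trans (dvdn_gcdl n m) nG.
have [alpha [hA eA]] := key _ _ (ltnSn #|G|) (cardG_gt0 G) (dvdnn _) S_G.
by exists alpha; split => // k kK; rewrite eA // mulr1n.
Qed.

Local Close Scope ring_scope.

Lemma pairM1 (gT hT : finGroupType) (x y : gT) : ((x, 1) * (y, 1) = (x * y, 1 : hT)).
Proof. change ((x * y, 1 * 1) = (x * y, 1 : hT)); by rewrite mulg1. Qed.
Lemma pairJ1 (gT hT : finGroupType) (x y : gT) (h : hT) : ((x, 1) ^ (y, h) = (x ^ y, 1 : hT)).
Proof. change ((x ^ y, 1 ^ h) = (x ^ y, 1 : hT)); by rewrite conj1g. Qed.
Lemma pairMV (gT hT : finGroupType) (x y : gT) (h : hT) : ((x, h) * (y, h)^-1 = (x * y^-1, 1 : hT)).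
Proof. change ((x * y^-1, h * h^-1) = (x * y^-1, 1 : hT)); by rewrite mulgV. Qed.
Lemma pairM (gT hT : finGroupType) (x y : gT) (h k : hT) : ((x, h) * (y, k) = (x * y, h * k)).
Proof. by []. Qed.

Lemma k1_group_set (gT hT : finGroupType) (U : {group gT * hT}) : group_set (k1 U).
Proof.
apply/group_setP; split; first by rewrite inE group1.
move=> x y; rewrite !inE => xU yU.
by have := groupM xU yU; rewrite pairM1.
Qed.

Theorem corollary4p1 (gT hT : finGroupType) (G : {group gT}) (H : {group hT})
    (U : {group gT * hT}) :
  U \subset setX G H ->
  p1 U = G -> p2 U = H ->
  (forall p : nat, prime p -> (p %| #|goursat_q U|)%N ->
     forall P : {group coset_of (k1 U)}, P \in 'Syl_p(goursat_q U) -> cyclic P) ->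
  extensible G H U.
Proof.
move=> sUGH p1U p2U cycH A hA f hf.
have divA := hypA_div hA.
pose K := Group (k1_group_set U).
have inK : forall k, (k \in K) = ((k, 1) \in U) by move=> k; rewrite inE.
have UG : forall g h, (g, h) \in U -> g \in G.
  by move=> g h gh; rewrite -p1U; apply/imsetP; exists (g, h).
have UH : forall g h, (g, h) \in U -> h \in H.
  by move=> g h gh; rewrite -p2U; apply/imsetP; exists (g, h).
have GU : forall g, g \in G -> exists h, (g, h) \in U.
  by move=> g; rewrite -p1U => /imsetP[[g' h] hU /= ->]; exists h.
have HU : forall h, h \in H -> exists g, (g, h) \in U.
  by move=> h; rewrite -p2U => /imsetP[[g h'] hU /= ->]; exists g.
have conjK : forall g k, g \in G -> k \in K -> ((k ^ g, 1) \in U) /\ f (k ^ g, 1) = f (k, 1).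
  move=> g k gG; rewrite inK => kU; have [h gh] := GU g gG.
  have e := pairJ1 k g h.
  by rewrite -e groupJ // (homJ hf).
have nsKG : K <| G.
  apply/andP; split.
    by apply/subsetP => k; rewrite inK => /UG.
  apply/subsetP => g gG; rewrite inE; apply/subsetP => y; rewrite mem_conjg => yK.
  rewrite -(conjgKV g y) inK; exact: (conjK _ _ gG yK).1.
pose phi g := f (g, 1).
have hphi : hom_on K phi.
  move=> x y; rewrite !inK => xU yU; by rewrite /phi -hf // pairM1.
have invphi : forall g k, g \in G -> k \in K -> phi (k ^ g)%g = phi k.
  by move=> g k gG kK; exact: (conjK _ _ gG kK).2.
have cycH' : forall p, prime p -> (p %| #|(G / K)%g|)%N ->
     forall P : {group coset_of K}, P \in 'Syl_p((G / K)%g) -> cyclic P.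
  by rewrite -p1U; exact: cycH.
have [alpha [halpha ealpha]] := main_ext divA nsKG hphi invphi cycH'.
have wd : forall g1 g2 h, (g1, h) \in U -> (g2, h) \in U ->
    (f (g1, h) - alpha g1 = f (g2, h) - alpha g2)%R.
  move=> g1 g2 h u1 u2.
  have g1G := UG _ _ u1; have g2G := UG _ _ u2.
  have kU : (g1 * g2^-1, 1) \in U by rewrite -(pairMV g1 g2 h) groupM ?groupV.
  have e1 : f (g1 * g2^-1, 1) = (f (g1, h) - f (g2, h))%R.
    by rewrite -(pairMV g1 g2 h) hf ?groupV // (homV hf u2).
  have e2 : alpha (g1 * g2^-1) = (alpha g1 - alpha g2)%R.
    by rewrite halpha ?groupV // (homV halpha g2G).
  have e3 : alpha (g1 * g2^-1) = f (g1 * g2^-1, 1) by rewrite ealpha // inK.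
  have e : f (g1, h) = (alpha g1 - alpha g2 + f (g2, h))%R.
    by rewrite -e2 e3 e1 GRing.subrK.
  by rewrite e GRing.addrAC (GRing.addrAC (alpha g1)) GRing.subrr GRing.add0r GRing.addrC.
pose beta h := if [pick g | (g, h) \in U] is Some g then (f (g, h) - alpha g)%R else 0%R.
have betaE : forall g h, (g, h) \in U -> beta h = (f (g, h) - alpha g)%R.
  move=> g h gh; rewrite /beta; case: pickP => [g' /= g'h|]; first exact: wd.
  by move/(_ g); rewrite gh.
exists (fun u => alpha u.1 + beta u.2)%R; split.
  move=> [x h] [y k]; rewrite !inE /= => /andP[xG hH] /andP[yG kH].
  have [g gh] := HU _ hH; have [g' g'k] := HU _ kH.
  have ggU : (g * g', h * k) \in U by rewrite -pairM groupM.
  rewrite (betaE _ _ ggU) (betaE _ _ gh) (betaE _ _ g'k) halpha //.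
  rewrite -pairM hf // halpha ?(UG _ _ gh) ?(UG _ _ g'k) //.
  by rewrite [RHS]GRing.addrACA; congr (_ + _)%R; rewrite GRing.opprD GRing.addrACA.
move=> [g h] gh /=; rewrite (betaE _ _ gh).
by rewrite GRing.addrC GRing.subrK.
Qed.
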